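(* Let $G$ be an $r$-graph, fix a residue $k$ modulo $r$, and let $\mathbf x,\mathbf y\in\vec E(G)$. There is a tight walk from $\mathbf x$ to $\mathbf y$ of stretch congruent to $k$ modulo $r$ if and only if $\mathbf x$ is tightly connected to $\mathrm{cyc}^k(\mathbf y)$, where $\mathrm{cyc}(x_1\cdots x_r)=x_rx_1\cdots x_{r-1}$.
   Context: An $r$-graph is an $r$-uniform hypergraph. An oriented edge is an ordered $r$-tuple $x_1\cdots x_r$ of vertices whose underlying set is an edge of $G$; $\vec E(G)$ is the set of oriented edges. $\mathbf x,\mathbf y\in\vec E(G)$ are tightly connected if there is a sequence $\mathbf x=\mathbf z^{(0)},\dots,\mathbf z^{(s)}=\mathbf y$ of oriented edges such that consecutive terms differ in at most one coordinate. A tight walk of stretch $\ell$ is a sequence $v_1\cdots v_{\ell+r}$ of (not necessarily distinct) vertices with $v_{i+1}\cdots v_{i+r}\in\vec E(G)$ for each $0\le i\le\ell$; it goes from $v_1\cdots v_r$ to $v_{\ell+1}\cdots v_{\ell+r}$. *)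

(* Defs.v *)
From mathcomp Require Import all_boot.
Set Implicit Arguments. Unset Strict Implicit. Unset Printing Implicit Defensive.

Definition is_rgraph (V : finType) (r : nat) (E : {set {set V}}) : Prop :=
  forall e, e \in E -> #|e| = r.

Definition oedge (V : finType) (r : nat) (E : {set {set V}}) (x : seq V) : bool :=
  (size x == r) && ([set v in x] \in E).

Definition differ_le1 (V : finType) (x y : seq V) : bool :=
  (size x == size y) && (count (fun p => p.1 != p.2) (zip x y) <= 1).

Definition tightly_connected (V : finType) (r : nat) (E : {set {set V}})
    (x y : seq V) : Prop :=
  exists p : seq (seq V),
    [/\ all (oedge r E) (x :: p),
        path (fun a b => differ_le1 a b) x p
      & last x p = y].

Definition tight_walk (V : finType) (r : nat) (E : {set {set V}})
    (l : nat) (x y : seq V) : Prop :=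
  exists s : seq V,
    [/\ size s = l + r,
        forall i, i <= l -> oedge r E (take r (drop i s)),
        take r s = x
      & take r (drop l s) = y].

Definition cyc (V : Type) (x : seq V) : seq V := rotr 1 x.

(* Main.v *)
Require Import Defs.
From mathcomp Require Import all_boot zify.

Section S.
Variables (V : finType) (r : nat) (E : {set {set V}}).
Hypothesis r_gt0 : 0 < r.

Local Notation tc := (tightly_connected r E).
Local Notation W := (tight_walk r E).

Lemma tc_refl a : oedge r E a -> tc a a.
Proof. by move=> ha; exists [::]; split => //=; rewrite andbT. Qed.

Lemma tc_trans a b c : tc a b -> tc b c -> tc a c.
Proof.
move=> [p1 [h1 h2 h3]] [p2 [h4 h5 h6]]; exists (p1 ++ p2); split.
- rewrite -cat_cons all_cat h1 /=; by case/andP: h4.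
- by rewrite cat_path h2 h3.
- by rewrite last_cat h3.
Qed.

Lemma tc_step a b : oedge r E a -> oedge r E b -> differ_le1 a b -> tc a b.
Proof. by move=> ha hb hab; exists [:: b]; split => //=; rewrite ?ha ?hb ?hab. Qed.

Lemma oedge_cyc a : oedge r E a -> oedge r E (cyc a).
Proof.
rewrite /oedge /cyc size_rotr => /andP[-> h]; rewrite /=.
suff -> : [set v in rotr 1 a] = [set v in a] by [].
by apply/setP => z; rewrite !inE mem_rotr.
Qed.

Lemma count_zip_rcons (a b : seq V) u v : size a = size b ->
  count (fun p : V * V => p.1 != p.2) (zip (rcons a u) (rcons b v)) =
  count (fun p : V * V => p.1 != p.2) (zip (u :: a) (v :: b)).
Proof. by move=> h; rewrite zip_rcons // -cats1 count_cat /= addn0 addnC. Qed.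

Lemma differ_cyc (a b : seq V) : differ_le1 a b -> differ_le1 (cyc a) (cyc b).
Proof.
rewrite /differ_le1 /cyc !size_rotr => /andP[/eqP hs hc]; rewrite hs eqxx /=.
case/lastP: a hs hc => [|a u]; case/lastP: b => [|b v] //=; rewrite ?size_rcons //.
move=> [hs]; rewrite !rotr1_rcons count_zip_rcons //.
Qed.

Lemma tc_cyc a b : tc a b -> tc (cyc a) (cyc b).
Proof.
move=> [p [h1 h2 h3]]; exists (map (@cyc V) p); split.
- rewrite -map_cons all_map; apply: sub_all h1 => z; exact: oedge_cyc.
- rewrite path_map; apply: sub_path h2 => z w; exact: differ_cyc.
- by rewrite last_map h3.
Qed.

Lemma tc_iter n a b : tc a b -> tc (iter n (@cyc V) a) (iter n (@cyc V) b).
Proof. by elim: n => //= n IH /IH; apply: tc_cyc. Qed.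

Lemma oedge_iter n a : oedge r E a -> oedge r E (iter n (@cyc V) a).
Proof. by elim: n => //= n IH /IH; apply: oedge_cyc. Qed.

Lemma iter_rot1 n (s : seq V) : n <= size s -> iter n (rot 1) s = rot n s.
Proof.
elim: n => [|n IH] hn /=; first by rewrite rot0.
by rewrite IH ?(ltnW hn) // -(rotD (m:=1)).
Qed.

Lemma iter_cancel (T : Type) (f g : T -> T) n x :
  cancel g f -> iter n f (iter n g x) = x.
Proof. by move=> K; elim: n x => // n IH x; rewrite iterSr iterS K. Qed.

Lemma size_iter_cyc n (y : seq V) : size (iter n (@cyc V) y) = size y.
Proof. by elim: n => //= n IH; rewrite /cyc size_rotr IH. Qed.

Lemma iter_cyc_r (y : seq V) : size y = r -> iter r (@cyc V) y = y.
Proof.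
move=> hy.
have h1 : iter r (rot 1) (iter r (@cyc V) y) = y.
  by apply: iter_cancel; apply: rotrK.
rewrite -{2}h1 iter_rot1; last by rewrite size_iter_cyc hy.
by rewrite rot_oversize // size_iter_cyc hy.
Qed.

Lemma iter_cyc_mod (y : seq V) n : size y = r -> iter n (@cyc V) y = iter (n %% r) (@cyc V) y.
Proof.
move=> hy; rewrite {1}(divn_eq n r) iterD.
have : size (iter (n %% r) (@cyc V) y) = r by rewrite size_iter_cyc.
move: (iter _ _ _) => z hz; elim: (n %/ r) => // q IH; by rewrite mulSn iterD IH iter_cyc_r.
Qed.
Lemma W0 a : oedge r E a -> W 0 a a.
Proof.
move=> ha; have hs : size a = r by case/andP: ha => /eqP.
exists a; split => //.
- move=> i; rewrite leqn0 => /eqP ->; rewrite drop0 take_oversize ?hs //.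
- by rewrite take_oversize ?hs.
- by rewrite drop0 take_oversize ?hs.
Qed.

Lemma Wcat l1 l2 a b c : W l1 a b -> W l2 b c -> W (l1 + l2) a c.
Proof.
move=> [s1 [hs1 hw1 ha hb]] [s2 [hs2 hw2 hb' hc]].
have e1 : drop l1 s1 = b by rewrite -hb take_oversize // size_drop hs1; lia.
have e2 : s2 = b ++ drop r s2 by rewrite -hb' cat_take_drop.
have eA : s1 ++ drop r s2 = take l1 s1 ++ s2.
  by rewrite {2}e2 -e1 catA cat_take_drop.
have ht : size (take l1 s1) = l1 by rewrite size_take hs1; case: ifP => //; lia.
exists (s1 ++ drop r s2); split.
- rewrite size_cat size_drop hs1 hs2; lia.
- move=> i hi; case: (leqP i l1) => hil.
  + rewrite drop_cat hs1 ifT; last lia.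
    rewrite takel_cat ?hw1 // size_drop hs1; lia.
  + rewrite eA drop_cat ht ifF; last lia.
    apply: hw2; lia.
- by rewrite takel_cat ?ha // hs1; lia.
- rewrite eA drop_cat ht ifF; last lia.
  by rewrite addKn hc.
Qed.

Lemma Wcyc1 z : oedge r E z -> W 1 (cyc z) z.
Proof.
move=> hz; have hs : size z = r by case/andP: hz => /eqP.
move: hz hs; case/lastP: z => [|c v] hz hs; first by move: r_gt0; rewrite -hs.
exists (v :: rcons c v); rewrite size_rcons in hs; split.
- by rewrite /= size_rcons hs add1n.
- move=> i; rewrite leq_eqVlt ltnS leqn0 => /orP[] /eqP ->.
  + by rewrite drop1 /= take_oversize ?size_rcons ?hs.
  + rewrite drop0 -hs /= -cats1 take_size_cat //.
    by rewrite hs; move: (oedge_cyc _ hz); rewrite /cyc rotr1_rcons.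
- by rewrite -hs /= -cats1 take_size_cat // cats1 /cyc rotr1_rcons.
- by rewrite drop1 /= take_oversize ?size_rcons ?hs.
Qed.
Lemma count0_eq (a b : seq V) : size a = size b ->
  count (fun p : V * V => p.1 != p.2) (zip a b) = 0 -> a = b.
Proof.
elim: a b => [|u a IH] [|v b] //= [hs]; move/eqP; rewrite addn_eq0 eqb0 negbK.
by case/andP => /eqP -> /eqP /(IH _ hs) ->.
Qed.

Lemma decomp (a b : seq V) : differ_le1 a b -> 0 < size a ->
  exists p u v q, a = p ++ u :: q /\ b = p ++ v :: q.
Proof.
elim: a b => [|u a IH] [|v b] //=; rewrite /differ_le1 /= eqSS => /andP[/eqP hs hc] _.
move: hc; case: (eqVneq u v) => [<-|huv] hc.
- move: hc; rewrite /= ?eqxx add0n => hc.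
  case: a IH hs hc => [|u' a'] IH hs hc.
  + by case: b hs hc => // _ _; exists [::], u, u, [::].
  + have [|//|p [w [w' [q [e1 e2]]]]] := IH b; first by rewrite /differ_le1 hs eqxx hc.
    by exists (u :: p), w, w', q; rewrite e1 e2.
- move: hc; rewrite /= ?huv ?add1n ltnS leqn0 => /eqP /(count0_eq _ _ hs) <-.
  by exists [::], u, v, a.
Qed.

Lemma take_or_drop (a b : seq V) i : differ_le1 a b -> 0 < size a ->
  take i a = take i b \/ drop i a = drop i b.
Proof.
move=> hd hs; have [p [u [v [q [-> ->]]]]] := decomp _ _ hd hs.
case: (leqP i (size p)) => hi.
- by left; rewrite !takel_cat.
- right; rewrite !drop_cat ltnNge (ltnW hi) /=.
  by case: (i - size p) (subn_gt0 (size p) i) => [|n]; rewrite ?hi.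
Qed.

Lemma oedge_rot a i : oedge r E a -> oedge r E (rot i a).
Proof.
rewrite /oedge size_rot => /andP[-> h]; rewrite /=.
suff -> : [set v in rot i a] = [set v in a] by [].
by apply/setP => z; rewrite !inE mem_rot.
Qed.

Lemma window_eq (a b : seq V) i : i <= size a -> size a = size b ->
  take (size a) (drop i (a ++ b)) = drop i a ++ take i b.
Proof.
move=> hi hs; rewrite drop_cat; case: ltnP => hi'.
- rewrite take_cat size_drop ifF; last lia.
  by rewrite subKn.
- have -> : i = size a by apply/eqP; rewrite eqn_leq hi hi'.
  by rewrite subnn drop0 drop_size hs !take_size.
Qed.

Lemma Wstep a b : oedge r E a -> oedge r E b -> differ_le1 a b -> W r a b.
Proof.
move=> ha hb hd.
have hsa : size a = r by case/andP: ha => /eqP.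
have hsb : size b = r by case/andP: hb => /eqP.
exists (a ++ b); split.
- by rewrite size_cat hsa hsb.
- move=> i hi; rewrite (_ : take r _ = drop i a ++ take i b); last by rewrite -window_eq ?hsa ?hsb.
  case: (take_or_drop _ _ i hd); first by rewrite hsa.
  + by move=> <-; apply: oedge_rot.
  + by move=> ->; apply: oedge_rot.
- by rewrite take_size_cat.
- by rewrite drop_size_cat // take_oversize ?hsb.
Qed.
Lemma count_zip_self (c : seq V) : count (fun p : V * V => p.1 != p.2) (zip c c) = 0.
Proof. by elim: c => //= x c ->; rewrite eqxx. Qed.

Lemma win_step (s : seq V) i : r + i < size s ->
  differ_le1 (take r (drop i s)) (cyc (take r (drop i.+1 s))).
Proof.
have [r' er] : exists r', r = r'.+1 by exists r.-1; rewrite prednK.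
move=> hs; have e1 : drop i.+1 s = drop 1 (drop i s) by rewrite drop_drop add1n.
have hsz : size (drop i s) = size s - i by rewrite size_drop.
rewrite e1; case: (drop i s) hsz => [|u t] hsz; first by move: hs hsz => /=; lia.
rewrite /= drop0 er /= (take_nth u); last by move: hs hsz; rewrite er /=; lia.
rewrite /cyc rotr1_rcons /differ_le1 /= eqxx /= count_zip_self addn0.
by case: (_ != _).
Qed.

Lemma W_tc l x y : oedge r E x -> W l x y -> tc x (iter l (@cyc V) y).
Proof.
move=> hx [s [hs hw hx' hy]].
suff : forall i, i <= l -> tc x (iter i (@cyc V) (take r (drop i s))).
  by move=> /(_ l (leqnn l)); rewrite hy.
elim=> [|i IH] hi.
  by rewrite drop0 hx' /=; apply: tc_refl.
apply: (tc_trans _ _ _ (IH (ltnW hi))).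
rewrite iterSr; apply: tc_iter; apply: tc_step.
- exact: hw (ltnW hi).
- by apply: oedge_cyc; apply: hw.
- by apply: win_step; rewrite hs; lia.
Qed.

Lemma iter_walk k y : oedge r E y -> W k (iter k (@cyc V) y) y.
Proof.
move=> hy; elim: k => [|k IH]; first exact: W0.
rewrite iterS -add1n; apply: Wcat IH.
by apply: Wcyc1; apply: oedge_iter.
Qed.

Lemma tc_walk x z : tc x z -> exists n, W (n * r) x z.
Proof.
move=> [p [h1 h2 h3]]; elim: p x h1 h2 h3 => [|w p IH] x /= h1 h2 h3.
  by exists 0; rewrite -h3; apply: W0; rewrite andbT in h1.
case/andP: h1 => hx h1; case/andP: h2 => hd h2.
have [n hn] := IH w h1 h2 h3.
exists n.+1; rewrite mulSn; apply: Wcat hn.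
by apply: Wstep => //; case/andP: h1.
Qed.
End S.

Theorem proposition3p9 (V : finType) (r : nat) (E : {set {set V}})
    (k : nat) (x y : seq V) :
  (0 < r)%N -> is_rgraph r E -> oedge r E x -> oedge r E y ->
  (exists l : nat, (l = k %[mod r]) /\ tight_walk r E l x y) <->
  tightly_connected r E x (iter k (@cyc V) y).
Proof.
move=> r0 _ hx hy.
have hsy : size y = r by case/andP: hy => /eqP.
split.
- move=> [l [hl hw]]; rewrite (iter_cyc_mod _ _ _ k hsy) -hl -(iter_cyc_mod _ _ _ l hsy).
  exact: (W_tc _ _ _ r0 _ _ _ hx hw).
- move=> htc; have [n hn] := tc_walk _ _ _ r0 _ _ htc.
  exists (n * r + k); split; first by rewrite modnMDl.
  apply: (Wcat _ _ _ r0 _ _ _ _ _ hn); exact: (iter_walk _ _ _ r0 _ _ hy).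
Qed.
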